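(* Let $(\Gamma,M)$ be an E-GCM graph, let $\lambda$ be a strongly dominant position, and let $(\gamma_{i_1},\gamma_{i_2},\dots)$ be any game sequence for a numbers game played from $\lambda$. For each $j$ let $\beta_j:=s_{i_1}\cdots s_{i_{j-1}}.\alpha_{i_j}$ (a positive root), so that $\phi_{\beta_j}$ is the positive root functional at node $\gamma_{i_j}$. Then for all $k\ge1$ and all $1\le j<k$, $\phi_{\beta_k}\ne\phi_{\beta_j}$.
   Context: E-GCM $M=(M_{ij})_{i,j\in I_n}$: real, $M_{ii}=2$, $M_{ij}\le0$ ($i\ne j$), $M_{ij}\ne0\iff M_{ji}\ne0$, nonzero $M_{ij}M_{ji}$ either $\ge4$ or $=4\cos^2(\pi/m)$ with $m\ge3$ integer; nodes $\gamma_i$, adjacent iff $M_{ij}\ne0$. Positions $\lambda\in\mathbb{R}^n$, strongly dominant if all $\lambda_i>0$; firing $\gamma_i$ allowed iff $\lambda_i>0$ and replaces $\lambda_j$ by $\lambda_j-M_{ij}\lambda_i$; a game sequence is the sequence of nodes fired in a numbers game that keeps firing nodes with positive population while any exist. $W$: Coxeter group with generators $s_i$, $s_i^2=e$, $(s_is_j)^{m_{ij}}=e$, $m_{ij}=k$ if $M_{ij}M_{ji}=4\cos^2(\pi/k)$ ($k\ge2$), $m_{ij}=\infty$ if $M_{ij}M_{ji}\ge4$. $W$ acts on real $V$ with basis $(\alpha_i)$ via $s_i.\alpha_j=\alpha_j-M_{ij}\alpha_i$; roots are the elements $w.\alpha_i$. For a root $\alpha=\sum c_i\alpha_i$, the root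 functional is $\phi_\alpha(x_1,\dots,x_n)=\sum c_ix_i$ (indeterminates $x_i$); it is positive if all $c_i\ge 0$. *)

(* Defs.v *)
From HB Require Import structures.
From mathcomp Require Import all_boot all_order all_algebra.
From mathcomp Require Import all_classical all_reals all_analysis.
Set Implicit Arguments. Unset Strict Implicit. Unset Printing Implicit Defensive.
Import Order.TTheory GRing.Theory Num.Theory.
Local Open Scope ring_scope.

Section Defs.
Variable R : realType.
Variable n : nat.

Definition EGCM (M : 'M[R]_n) : Prop :=
  (forall i, M i i = 2) /\
  (forall i j, i != j -> M i j <= 0) /\
  (forall i j, M i j != 0 <-> M j i != 0) /\
  (forall i j, i != j -> M i j * M j i != 0 ->
     4 <= M i j * M j i \/
     exists m : nat, (3 <= m)%N /\ M i j * M j i = 4 * (cos (pi / m%:R)) ^+ 2).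

Definition strongly_dominant (lam : 'I_n -> R) : Prop := forall i, 0 < lam i.

Definition fire (M : 'M[R]_n) (i : 'I_n) (lam : 'I_n -> R) : 'I_n -> R :=
  fun j => lam j - M i j * lam i.

Fixpoint play (M : 'M[R]_n) (lam : 'I_n -> R) (g : nat -> 'I_n) (t : nat)
  : 'I_n -> R :=
  match t with
  | 0 => lam
  | t'.+1 => fire M (g t') (play M lam g t')
  end.

(* t is an index within the (possibly infinite, len = None) sequence *)
Definition in_range (len : option nat) (t : nat) : Prop :=
  match len with None => True | Some N => (t < N)%N end.

(* game sequence (0-indexed g 0, g 1, ...) of length len played from lam:
   every firing is legal, and if the sequence is finite the game has
   terminated (no node has positive population). *)
Definition game_sequence (M : 'M[R]_n) (lam : 'I_n -> R)
    (len : option nat) (g : nat -> 'I_n) : Prop :=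
  (forall t, in_range len t -> 0 < play M lam g t (g t)) /\
  (forall N, len = Some N -> forall i, play M lam g N i <= 0).

(* vectors of V in coordinates w.r.t. the basis (alpha_i) *)
Definition alpha (i : 'I_n) : 'I_n -> R := fun j => if j == i then 1 else 0.

(* s_i . v = v - (sum_j M_ij v_j) alpha_i ,  so that s_i.alpha_j = alpha_j - M_ij alpha_i *)
Definition refl (M : 'M[R]_n) (i : 'I_n) (v : 'I_n -> R) : 'I_n -> R :=
  fun k => v k - (\sum_j M i j * v j) * alpha i k.

Definition wact (M : 'M[R]_n) (l : seq 'I_n) (v : 'I_n -> R) : 'I_n -> R :=
  foldr (refl M) v l.

Definition beta (M : 'M[R]_n) (g : nat -> 'I_n) (t : nat) : 'I_n -> R :=
  wact M [seq g k | k <- iota 0 t] (alpha (g t)).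

Definition root_functional (a : 'I_n -> R) : ('I_n -> R) -> R :=
  fun x => \sum_i a i * x i.

End Defs.

(* Main.v *)
Require Import Defs.
From HB Require Import structures.
From mathcomp Require Import all_boot all_order all_algebra.
From mathcomp Require Import all_classical all_reals all_analysis.
From mathcomp Require Import ring lra zify.
Set Implicit Arguments. Unset Strict Implicit. Unset Printing Implicit Defensive.
Import Order.TTheory GRing.Theory Num.Theory.
Local Open Scope ring_scope.

Section Basic.
Variable R : realType.
Variable n : nat.
Variable M : 'M[R]_n.
Hypothesis Mdiag : forall i, M i i = 2.

Definition rho (i : 'I_n) (v : 'I_n -> R) := \sum_j M i j * v j.
Definition lc (a : R) (u : 'I_n -> R) (b : R) (v : 'I_n -> R) : 'I_n -> R :=
  fun k => a * u k + b * v k.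

Lemma sum_alpha (f : 'I_n -> R) j : \sum_k f k * alpha R j k = f j.
Proof.
rewrite (bigD1 j) //= big1 ?addr0; first by rewrite /alpha eqxx mulr1.
by move=> k /negbTE kj; rewrite /alpha kj mulr0.
Qed.

Lemma rho_alpha i j : rho i (alpha R j) = M i j.
Proof. exact: sum_alpha. Qed.

Lemma rho_lc i a u b v : rho i (lc a u b v) = a * rho i u + b * rho i v.
Proof.
rewrite /rho /lc !mulr_sumr -big_split /=; apply: eq_bigr => k _; ring.
Qed.

Lemma refl_lc i a u b v : refl M i (lc a u b v) = lc a (refl M i u) b (refl M i v).
Proof.
apply: funext => k; rewrite /refl /lc -/(rho i _) rho_lc /rho; ring.
Qed.

Lemma wact_lc l a u b v : wact M l (lc a u b v) = lc a (wact M l u) b (wact M l v).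
Proof. by elim: l => //= i l IH; rewrite IH refl_lc. Qed.

Lemma refl_invol i v : refl M i (refl M i v) = v.
Proof.
apply: funext => k.
have -> : refl M i v = lc 1 v (- rho i v) (alpha R i).
  by apply: funext => j; rewrite /refl /lc /rho; ring.
rewrite /refl -/(rho i _) rho_lc rho_alpha Mdiag /lc; ring.
Qed.

Lemma refl_alpha i : refl M i (alpha R i) = fun k => - alpha R i k.
Proof.
apply: funext => k; rewrite /refl -/(rho i _) rho_alpha Mdiag; ring.
Qed.

Lemma refl_other i v k : k != i -> refl M i v k = v k.
Proof. by move=> /negbTE ki; rewrite /refl /alpha ki mulr0 subr0. Qed.

Lemma wact_cat l1 l2 v : wact M (l1 ++ l2) v = wact M l1 (wact M l2 v).
Proof. by rewrite /wact foldr_cat. Qed.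

Lemma wact_rcons l a v : wact M (rcons l a) v = wact M l (refl M a v).
Proof. by rewrite -cats1 wact_cat. Qed.

Lemma wact_revK l v : wact M (rev l) (wact M l v) = v.
Proof.
elim: l v => //= a l IH v.
by rewrite rev_cons wact_rcons refl_invol IH.
Qed.

Lemma wact_Krev l v : wact M l (wact M (rev l) v) = v.
Proof. by rewrite -{1}(revK l) wact_revK. Qed.

End Basic.

Lemma ex_min (P : nat -> Prop) : (exists k, P k) -> exists k, P k /\ forall j, P j -> (k <= j)%N.
Proof.
move=> ex.
have ex' : exists k, `[< P k >] by case: ex => k Pk; exists k; apply/asboolP.
case: (ex_minnP ex') => k /asboolP Pk Hmin; exists k; split => // j Pj.
by apply: Hmin; apply/asboolP.
Qed.

Section Words.
Variable R : realType.
Variable n : nat.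
Variable M : 'M[R]_n.
Hypothesis Mdiag : forall i, M i i = 2.

Definition eqw (l1 l2 : seq 'I_n) := forall v, wact M l1 v = wact M l2 v.
Definition reduced (l : seq 'I_n) := forall l', eqw l' l -> (size l <= size l')%N.

Lemma eqw_refl l : eqw l l. Proof. by []. Qed.
Lemma eqw_sym l1 l2 : eqw l1 l2 -> eqw l2 l1. Proof. by move=> h v. Qed.
Lemma eqw_trans l1 l2 l3 : eqw l1 l2 -> eqw l2 l3 -> eqw l1 l3.
Proof. by move=> h1 h2 v; rewrite h1. Qed.
Lemma eqw_cat l1 l1' l2 l2' : eqw l1 l1' -> eqw l2 l2' -> eqw (l1 ++ l2) (l1' ++ l2').
Proof. by move=> h1 h2 v; rewrite !wact_cat h2 h1. Qed.
Lemma eqw_rcons2 l a : eqw (rcons (rcons l a) a) l.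
Proof. by move=> v; rewrite !wact_rcons refl_invol. Qed.
Lemma eqw_cancel l1 l2 a : eqw (l1 ++ a :: a :: l2) (l1 ++ l2).
Proof. by move=> v; rewrite !wact_cat /= refl_invol. Qed.

Lemma exists_reduced l : exists l', eqw l' l /\ reduced l'.
Proof.
have [k [[l' [sz e]] mn]] := ex_min (ex_intro (fun k => exists l', size l' = k /\ eqw l' l) (size l) (ex_intro _ l (conj erefl (eqw_refl l)))).
exists l'; split => // l'' e''; rewrite sz; apply: mn; exists l''; split => //.
exact: eqw_trans e'' e.
Qed.

Definition nxt (x y : 'I_n) (i : nat) := if odd i then y else x.
Definition alt (x y : 'I_n) (L : nat) := [seq nxt x y i | i <- iota 0 L].

Lemma size_alt x y L : size (alt x y L) = L.
Proof. by rewrite size_map size_iota. Qed.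

Lemma nxtS x y i : nxt x y i.+1 = nxt y x i.
Proof. by rewrite /nxt /=; case: (odd i). Qed.

Lemma alt_S x y L : alt x y L.+1 = x :: alt y x L.
Proof.
rewrite /alt /= -(addn0 1%N) iotaDl -map_comp; congr (_ :: _).
by apply: eq_map => i /=; rewrite add1n nxtS.
Qed.

Lemma alt_rcons x y L : alt x y L.+1 = rcons (alt x y L) (nxt x y L).
Proof. by rewrite /alt -addn1 iotaD map_cat cats1. Qed.

Lemma nxt_add x y k i : nxt x y (k + i) = nxt (nxt x y k) (nxt x y k.+1) i.
Proof. by rewrite /nxt oddD /=; case: (odd k); case: (odd i). Qed.

Lemma alt_cat x y k j : alt x y (k + j) = alt x y k ++ alt (nxt x y k) (nxt x y k.+1) j.
Proof.
rewrite /alt iotaD map_cat add0n; congr (_ ++ _).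
by rewrite -(addn0 k) iotaDl -map_comp addn0; apply: eq_map => i /=; rewrite nxt_add.
Qed.

Lemma nxt_neq x y i : x != y -> nxt x y i.+1 != nxt x y i.
Proof. by move=> xy; rewrite /nxt /=; case: (odd i) => //=; rewrite eq_sym. Qed.

Lemma nxt_in x y i : (nxt x y i == x) || (nxt x y i == y).
Proof. by rewrite /nxt; case: (odd i); rewrite eqxx ?orbT. Qed.

Definition inpair (s s' : 'I_n) (a : 'I_n) := (a == s) || (a == s').

Lemma alt_of (s s' : 'I_n) q : s != s' -> all (inpair s s') q ->
  (forall q1 q2 a, q <> q1 ++ a :: a :: q2) ->
  exists x y, q = alt x y (size q) /\ x != y /\ inpair s s' x /\ inpair s s' y.
Proof.
move=> ss'; elim: q => [|a q IH] /= Hall Hadj.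
  by exists s, s'; rewrite /inpair !eqxx orbT.
case/andP: Hall => Ha Hall.
have Hadj' : forall q1 q2 b, q <> q1 ++ b :: b :: q2.
  by move=> q1 q2 b E; apply: (Hadj (a :: q1) q2 b); rewrite E.
have [x [y [Eq [xy [Hx Hy]]]]] := IH Hall Hadj'.
clear IH; case: q Eq Hadj Hadj' Hall => [|b q] Eq Hadj Hadj' Hall.
  case/orP: Ha => /eqP ->.
    by exists s, s'; rewrite /alt /= /inpair !eqxx orbT.
  by exists s', s; rewrite /alt /= /inpair !eqxx orbT eq_sym.
have Ebx : b = x by move: Eq; rewrite /= alt_S => -[].
have ab : a != b by apply/eqP => Eab; apply: (Hadj [::] q a); rewrite /= -Eab.
have Eay : a = y.
  move: Ha Hx Hy xy ab; rewrite /inpair Ebx.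
  by case/orP=> /eqP ->; case/orP=> /eqP ->; case/orP=> /eqP ->; rewrite ?eqxx // eq_sym ?(negbTE ss').
exists y, x; split; last by rewrite eq_sym.
by rewrite Eq Eay alt_S /= size_map size_iota.
Qed.

End Words.

Fixpoint hh {R : realType} (k : nat) (A B : R) {struct k} : R :=
  match k with
  | 0 => 0
  | k1.+1 => match k1 with
             | 0 => 1
             | k'.+1 => A * hh k1 B A - hh k' A B
             end
  end.

Lemma hh0 (R : realType) (A B : R) : hh 0 A B = 0. Proof. by []. Qed.
Lemma hh1 (R : realType) (A B : R) : hh 1 A B = 1. Proof. by []. Qed.
Lemma hhSS (R : realType) k (A B : R) : hh k.+2 A B = A * hh k.+1 B A - hh k A B. Proof. by []. Qed.

Section Dihedral.
Variable R : realType.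
Variable n : nat.
Variable M : 'M[R]_n.
Hypothesis Mdiag : forall i, M i i = 2.

Lemma refl_alpha_gen i j : refl M i (alpha R j) = fun k => alpha R j k - M i j * alpha R i k.
Proof. by apply: funext => k; rewrite /refl -/(rho M i _) rho_alpha. Qed.

Lemma wact_cons a l v : wact M (a :: l) v = refl M a (wact M l v).
Proof. by []. Qed.

Lemma F_formula x y L : x != y ->
  wact M (alt x y L) (alpha R (nxt x y L)) =
  lc (hh L.+1 (- M x y) (- M y x)) (alpha R x) (hh L (- M y x) (- M x y)) (alpha R y).
Proof.
elim: L x y => [|L IH] x y xy.
  by apply: funext => k; rewrite /lc /= /nxt /=; ring.
rewrite alt_S wact_cons nxtS IH 1?eq_sym // refl_lc refl_alpha_gen refl_alpha //.
by apply: funext => k; rewrite /lc hhSS; ring.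
Qed.

Lemma wact_opp l v : wact M l (fun k => - v k) = fun k => - wact M l v k.
Proof.
have -> : (fun k => - v k) = lc (-1) v 0 v by apply: funext => k; rewrite /lc; ring.
by rewrite wact_lc; apply: funext => k; rewrite /lc; ring.
Qed.

Lemma wact_alt_fix x y L h : refl M x h = h -> refl M y h = h -> wact M (alt x y L) h = h.
Proof.
elim: L x y => [|L IH] x y hx hy //.
by rewrite alt_S wact_cons IH.
Qed.

Lemma braid_alpha x y m : x != y ->
  hh m.+1 (- M x y) (- M y x) = 0 -> hh m.+1 (- M y x) (- M x y) = 0 ->
  forall z, inpair x y z ->
  wact M (alt x y m.+1) (alpha R z) = wact M (alt y x m.+1) (alpha R z).
Proof.
move=> xy h1 h2.
have yx : y != x by rewrite eq_sym.
have Ha : wact M (alt x y m.+1) (alpha R (nxt x y m)) = wact M (alt y x m.+1) (alpha R (nxt x y m)).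
  rewrite alt_rcons wact_rcons refl_alpha // wact_opp F_formula //.
  rewrite -nxtS F_formula // hhSS h1; apply: funext => k; rewrite /lc; ring.
have Hb : wact M (alt x y m.+1) (alpha R (nxt y x m)) = wact M (alt y x m.+1) (alpha R (nxt y x m)).
  rewrite [in RHS]alt_rcons wact_rcons refl_alpha // wact_opp F_formula //.
  rewrite -nxtS F_formula // hhSS h2; apply: funext => k; rewrite /lc; ring.
move=> z /orP [] /eqP ->; move: Ha Hb; rewrite /nxt; case: (odd m) => // Ha Hb.
Qed.

Lemma braid x y m : x != y ->
  hh m.+1 (- M x y) (- M y x) = 0 -> hh m.+1 (- M y x) (- M x y) = 0 ->
  4 - (- M x y) * (- M y x) != 0 ->
  eqw M (alt x y m.+1) (alt y x m.+1).
Proof.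
move=> xy h1 h2 D0 v.
set D := 4 - (- M x y) * (- M y x).
set c1 := (2 * rho M x v + (- M x y) * rho M y v) / D.
set c2 := ((- M y x) * rho M x v + 2 * rho M y v) / D.
set p := lc c1 (alpha R x) c2 (alpha R y).
set h := lc 1 v (-1) p.
have Ev : v = lc 1 h 1 p by apply: funext => k; rewrite /h /lc; ring.
have rx : rho M x h = 0.
  rewrite /h /p !rho_lc !rho_alpha Mdiag /c1 /c2 /D; field; exact: D0.
have ry : rho M y h = 0.
  rewrite /h /p !rho_lc !rho_alpha Mdiag /c1 /c2 /D; field; exact: D0.
have fx : refl M x h = h by apply: funext => k; rewrite /refl -/(rho M x h) rx; ring.
have fy : refl M y h = h by apply: funext => k; rewrite /refl -/(rho M y h) ry; ring.
have inx : inpair x y x by rewrite /inpair eqxx.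
have iny : inpair x y y by rewrite /inpair eqxx orbT.
clearbody h.
have F1 := wact_alt_fix (x:=x) (y:=y) m.+1 fx fy.
have F2 := wact_alt_fix (x:=y) (y:=x) m.+1 fy fx.
rewrite Ev !wact_lc F1 F2.
by rewrite (braid_alpha xy h1 h2 inx) (braid_alpha xy h1 h2 iny).
Qed.

Definition DihP (x y : 'I_n) : Prop :=
  (forall k, 0 <= hh k (- M x y) (- M y x) /\ 0 <= hh k (- M y x) (- M x y)) \/
  exists m, (forall k, (k <= m.+1)%N -> 0 <= hh k (- M x y) (- M y x) /\ 0 <= hh k (- M y x) (- M x y))
     /\ hh m.+1 (- M x y) (- M y x) = 0 /\ hh m.+1 (- M y x) (- M x y) = 0
     /\ 4 - (- M x y) * (- M y x) != 0.

Lemma eqw_rcons l1 l2 a : eqw M l1 l2 -> eqw M (rcons l1 a) (rcons l2 a).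
Proof. by move=> e; rewrite -!cats1; apply: eqw_cat. Qed.

Definition nonneg (v : 'I_n -> R) := forall k, 0 <= v k.

Lemma nonneg_alpha s : nonneg (alpha R s).
Proof. by move=> k; rewrite /alpha; case: ifP. Qed.

Hypothesis Hdih : forall x y, x != y -> DihP x y.

Lemma braid_xy x y m : x != y ->
  hh m.+1 (- M x y) (- M y x) = 0 -> hh m.+1 (- M y x) (- M x y) = 0 ->
  4 - (- M x y) * (- M y x) != 0 ->
  forall u v, u != v -> inpair x y u -> inpair x y v ->
  eqw M (alt u v m.+1) (alt v u m.+1).
Proof.
move=> xy h1 h2 D uu vv uv.
have yx : y != x by rewrite eq_sym.
rewrite /inpair => /orP [] /eqP -> /orP [] /eqP ->; rewrite ?eqxx // in uv *.
- exact: braid.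
- by apply: braid => //; rewrite mulrC.
Qed.

Lemma mainT N : forall l s, size l = N -> reduced M l ->
  (forall l', eqw M l' (rcons l s) -> (N <= size l')%N) -> nonneg (wact M l (alpha R s)).
Proof.
elim/ltn_ind: N => N IH l s Hsz Hred Hge.
case/lastP: l Hsz Hred Hge => [|l0 s'] Hsz Hred Hge; first exact: nonneg_alpha.
rewrite size_rcons in Hsz.
have ss' : s != s'.
  apply/eqP => E; subst s'.
  have := Hge l0 (eqw_sym (eqw_rcons2 Mdiag _ _)); rewrite -Hsz ltnn //.
set P := fun k => exists p q, size p = k /\ all (inpair s s') q /\
   eqw M (p ++ q) (rcons l0 s') /\ (size p + size q = N)%N.
have P0 : P (size l0).
  exists l0, [:: s']; split => //; split; first by rewrite /= /inpair eqxx orbT.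
  by rewrite cats1 addn1 Hsz.
have [k0 [[p [q [Hk0 [Hq [Hpq HN]]]]] Hmin]] := ex_min (ex_intro _ _ P0).
have k0N : (k0 < N)%N by rewrite -Hsz ltnS; apply: Hmin.
have Hred' : forall l', eqw M l' (rcons l0 s') -> (N <= size l')%N.
  by move=> l' e; rewrite -Hsz -(size_rcons l0 s'); apply: Hred.
have Hredp : reduced M p.
  move=> p' e; rewrite leqNgt; apply/negP => lt.
  have := Hred' (p' ++ q) (eqw_trans (eqw_cat e (eqw_refl M q)) Hpq).
  by rewrite size_cat -HN leq_add2r leqNgt lt.
have Hgep : forall t, inpair s s' t -> forall l', eqw M l' (rcons p t) -> (size p <= size l')%N.
  move=> t Ht l' e; rewrite leqNgt; apply/negP => lt.
  have Pl : P (size l').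
    exists l', (t :: q); split => //; split; first by rewrite /= Ht.
    have e2 : eqw M (l' ++ t :: q) (rcons l0 s').
      rewrite -cat_rcons; apply: (eqw_trans _ Hpq); apply: eqw_cat (eqw_refl M q).
      exact: eqw_trans (eqw_rcons t e) (eqw_rcons2 Mdiag p t).
    split => //; apply/eqP; rewrite eqn_leq; apply/andP; split.
      by rewrite -HN /= addnS -addSn leq_add2r.
    by have := Hred' _ e2; rewrite size_cat.
  by have := Hmin _ Pl; rewrite leqNgt -Hk0 lt.
have nps : nonneg (wact M p (alpha R s)).
  apply: (IH (size p)) => //; first by rewrite Hk0.
  by apply: Hgep; rewrite /inpair eqxx.
have nps' : nonneg (wact M p (alpha R s')).
  apply: (IH (size p)) => //; first by rewrite Hk0.
  by apply: Hgep; rewrite /inpair eqxx orbT.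
have Hredq : reduced M q.
  move=> q' e; rewrite leqNgt; apply/negP => lt.
  have := Hred' (p ++ q') (eqw_trans (eqw_cat (eqw_refl M p) e) Hpq).
  by rewrite size_cat -HN leq_add2l leqNgt lt.
have Hadj : forall q1 q2 a, q <> q1 ++ a :: a :: q2.
  move=> q1 q2 a E.
  have e : eqw M (q1 ++ q2) q by rewrite E; apply: eqw_sym; exact: eqw_cancel.
  have := Hredq _ e.
  rewrite E !size_cat /=; lia.
have [x [y [Eq [xy [Hx Hy]]]]] := alt_of ss' Hq Hadj.
have nxt_in2 : forall i, inpair s s' (nxt x y i).
  by move=> i; rewrite /nxt; case: (odd i).
case Lq: (size q) Eq => [|L] Eq.
  by move: HN; rewrite Lq addn0 Hk0 => E; rewrite E ltnn in k0N.
have Hlast : nxt x y L != s.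
  apply/negP => /eqP E.
  have : eqw M (p ++ alt x y L) (rcons (rcons l0 s') s).
    apply: (eqw_trans _ (eqw_rcons s Hpq)).
    rewrite Eq alt_rcons E -rcons_cat; apply: eqw_sym; exact: eqw_rcons2.
  move/Hge; rewrite size_cat size_alt; move: HN; rewrite Lq; lia.
have Hs' : nxt x y L = s'.
  by move: (nxt_in2 L) Hlast; rewrite /inpair => /orP [] /eqP ->; rewrite ?eqxx.
have Hs : nxt x y L.+1 = s.
  move: (nxt_in2 L.+1) (nxt_neq L xy); rewrite Hs' /inpair => /orP [] /eqP -> //.
  by rewrite eqxx.
have Fq : wact M q (alpha R s) =
   lc (hh L.+2 (- M x y) (- M y x)) (alpha R x) (hh L.+1 (- M y x) (- M x y)) (alpha R y).
  by rewrite Eq -Hs F_formula.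
have Hcoef : 0 <= hh L.+2 (- M x y) (- M y x) /\ 0 <= hh L.+1 (- M y x) (- M x y).
  case: (Hdih xy) => [Hinf | [m [Hpos [h1 [h2 D]]]]].
    by split; [exact: (Hinf _).1 | exact: (Hinf _).2].
  case: (leqP L.+2 m.+1) => Lm.
    by split; [exact: (Hpos _ Lm).1 | exact: (Hpos L.+1 (ltnW Lm)).2].
  exfalso.
  set j := (L - m)%N.
  have EL : L.+1 = (j + m.+1)%N by rewrite /j; lia.
  have Eq2 : q = alt x y j ++ alt (nxt x y j) (nxt x y j.+1) m.+1 by rewrite Eq EL alt_cat.
  set u := nxt x y j; set v := nxt x y j.+1.
  have uv : u != v by rewrite eq_sym nxt_neq.
  have inu : inpair x y u by exact: nxt_in.
  have inv : inpair x y v by exact: nxt_in.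
  have Hb := braid_xy xy h1 h2 D uv inu inv.
  have Hvu : nxt v u m = s by rewrite -nxtS /u /v -nxt_add -EL.
  have : eqw M (p ++ alt x y j ++ alt v u m) (rcons (rcons l0 s') s).
    apply: (eqw_trans _ (eqw_rcons s Hpq)).
    have e1 : eqw M (p ++ (alt x y j ++ alt v u m.+1)) (p ++ q).
      apply: eqw_cat (eqw_refl M p) _; rewrite Eq2; apply: eqw_cat (eqw_refl M _) _.
      exact: eqw_sym.
    apply: (eqw_trans _ (eqw_rcons s e1)).
    rewrite alt_rcons Hvu -!rcons_cat; apply: eqw_sym; exact: eqw_rcons2.
  move/Hge; rewrite !size_cat !size_alt; move: HN; rewrite Lq; lia.
have npx : forall z, inpair s s' z -> nonneg (wact M p (alpha R z)).
  by move=> z /orP [] /eqP ->.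
move=> k; rewrite -Hpq wact_cat Fq wact_lc /lc.
case: Hcoef => c1 c2.
by apply: addr_ge0; apply: mulr_ge0 => //; apply: npx.
Qed.

Lemma dich l a : (forall k, 0 <= wact M l (alpha R a) k) \/ (forall k, wact M l (alpha R a) k <= 0).
Proof.
have [l1 [e1 r1]] := exists_reduced M l.
have [r [er rr]] := exists_reduced M (rcons l1 a).
case: (leqP (size l1) (size r)) => h.
  left; rewrite -e1; apply: (mainT (N := size l1)) => // l' e.
  exact: leq_trans h (rr l' (eqw_trans e (eqw_sym er))).
right => k.
have nn : nonneg (wact M r (alpha R a)).
  apply: (mainT (N := size r)) => // l' e.
  have e2 : eqw M l' l1.
    apply: eqw_trans e _; apply: eqw_trans (eqw_rcons a er) _; exact: eqw_rcons2.
  exact: leq_trans (ltnW h) (r1 l' e2).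
have := nn k; rewrite er wact_rcons (refl_alpha Mdiag) wact_opp e1; lra.
Qed.

End Dihedral.

Section Game.
Variable R : realType.
Variable n : nat.
Variable M : 'M[R]_n.
Hypothesis Mdiag : forall i, M i i = 2.
Hypothesis Hdih : forall x y, x != y -> DihP M x y.
Variable lam : 'I_n -> R.
Variable g : nat -> 'I_n.

Definition pre t := [seq g i | i <- iota 0 t].

Lemma pre_S t : pre t.+1 = rcons (pre t) (g t).
Proof. by rewrite /pre -addn1 iotaD map_cat cats1. Qed.

Lemma sum_alpha' (f : 'I_n -> R) j : \sum_k alpha R j k * f k = f j.
Proof. by rewrite -(sum_alpha f j); apply: eq_bigr => k _; rewrite mulrC. Qed.

Lemma refl_pair a u x : \sum_i refl M a u i * x i = \sum_i u i * fire M a x i.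
Proof.
rewrite (eq_bigr (fun i => u i * x i - rho M a u * (x i * alpha R a i))); last first.
  by move=> i _; rewrite /refl -/(rho M a u); ring.
rewrite sumrB -mulr_sumr sum_alpha.
rewrite [RHS](eq_bigr (fun i => u i * x i - x a * (M a i * u i))); last first.
  by move=> i _; rewrite /fire; ring.
by rewrite sumrB -mulr_sumr -/(rho M a u) mulrC.
Qed.

Lemma pairing t u : \sum_i wact M (pre t) u i * lam i = \sum_i u i * play M lam g t i.
Proof.
elim: t u => [|t IH] u //.
by rewrite pre_S wact_rcons IH refl_pair.
Qed.

Lemma pair_beta t : \sum_i beta M g t i * lam i = play M lam g t (g t).
Proof. by rewrite /beta -/(pre t) pairing sum_alpha'. Qed.

Definition vv t m := wact M (rev (pre t)) (beta M g m).

Lemma claimA t : (forall u, (u < t)%N -> 0 < play M lam g u (g u)) ->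
  forall m, (m < t)%N -> forall k, vv t m k <= 0.
Proof.
elim: t => [//|t IH] Hleg m mt k.
have Hv : vv t.+1 m = refl M (g t) (vv t m).
  by rewrite /vv pre_S rev_rcons.
rewrite Hv.
rewrite ltnS leq_eqVlt in mt; case/orP: mt => [/eqP -> | mt].
  rewrite /vv /beta -/(pre t) wact_revK //. rewrite (refl_alpha Mdiag (g t)).
  by rewrite /alpha; case: ifP => _; lra.
have Hleg' : forall u, (u < t)%N -> 0 < play M lam g u (g u).
  by move=> u ut; apply: Hleg; apply: ltnW.
have neg := IH Hleg' m mt.
have [pos|] := dich Mdiag Hdih (rev (pre t.+1) ++ pre m) (g m); last first.
  by move=> H; have := H k; rewrite wact_cat -/(beta M g m) -/(vv _ m) Hv.
exfalso.
have pos' : forall k, 0 <= refl M (g t) (vv t m) k.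
  by move=> k'; have := pos k'; rewrite wact_cat -/(beta M g m) -/(vv _ m) Hv.
set c := vv t m (g t).
have Ev : vv t m = lc c (alpha R (g t)) 0 (alpha R (g t)).
  apply: funext => k'; rewrite /lc /alpha.
  case: eqP => [-> | /eqP kg]; first by rewrite /c; ring.
  have := pos' k'; rewrite refl_other // => h1; have := neg k'; lra.
have Eb : beta M g m = lc c (beta M g t) 0 (beta M g t).
  by rewrite -(wact_Krev Mdiag (pre t) (beta M g m)) -/(vv t m) Ev wact_lc.
have := pair_beta m; rewrite Eb.
rewrite (eq_bigr (fun i => c * (beta M g t i * lam i))); last first.
  by move=> i _; rewrite /lc; ring.
rewrite -mulr_sumr pair_beta => E.
have h1 := Hleg m (ltnW mt).
have h2 := Hleg t (leqnn _).
have c0 : c <= 0 by apply: neg.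
rewrite -E in h1.
have := mulr_le0_ge0 c0 (ltW h2); rewrite leNgt h1 //.
Qed.

End Game.

Section Trig.
Variable R : realType.

Lemma hh_inf (A B : R) : 0 < A -> 0 < B -> 4 <= A * B ->
  forall k, 0 <= hh k A B /\ 0 <= hh k B A.
Proof.
move=> A0 B0 AB4.
have J : forall k, (0 <= hh k A B /\ 2 * hh k A B <= A * hh k.+1 B A) /\
                   (0 <= hh k B A /\ 2 * hh k B A <= B * hh k.+1 A B).
  elim => [|k [[IH1 IH2] [IH3 IH4]]].
    by rewrite !hh0 !hh1 !mulr1 !mulr0; split; split => //; apply: ltW.
  have h1 : 0 <= hh k.+1 A B.
    have : 0 <= B * hh k.+1 A B by lra.
    by rewrite pmulr_rge0.
  have h2 : 0 <= hh k.+1 B A.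
    have : 0 <= A * hh k.+1 B A by lra.
    by rewrite pmulr_rge0.
  rewrite !hhSS; split; split => //.
  - have e1 : 0 <= A * (B * hh k.+1 A B - 2 * hh k B A) by apply: mulr_ge0; lra.
    have e2 : 0 <= (A * B - 4) * hh k.+1 A B by apply: mulr_ge0; lra.
    nra.
  - have e1 : 0 <= B * (A * hh k.+1 B A - 2 * hh k A B) by apply: mulr_ge0; lra.
    have e2 : 0 <= (A * B - 4) * hh k.+1 B A by apply: mulr_ge0; lra.
    nra.
by move=> k; have [[? _] [? _]] := J k.
Qed.

Lemma hh_zero : forall k, (k <= 2)%N -> 0 <= hh k (0 : R) 0.
Proof. by case=> [|[|[|k]]] //= _; rewrite ?mul0r ?subrr. Qed.

Lemma hh_fin (m : nat) (A B : R) : (2 < m)%N -> 0 <= A -> 0 <= B ->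
  A * B = 4 * cos (pi / m%:R) ^+ 2 ->
  (forall k, (k <= m)%N -> 0 <= hh k A B /\ 0 <= hh k B A) /\
  hh m A B = 0 /\ hh m B A = 0 /\ 4 - A * B != 0.
Proof.
move=> m2 A0 B0 AB.
set th := (pi / m%:R : R).
have m0 : (0 < m%:R :> R) by rewrite ltr0n; apply: leq_trans m2.
have th0 : 0 < th by rewrite /th divr_gt0 // pi_gt0.
have thm : m%:R * th = pi by rewrite /th; field; rewrite gt_eqF.
have th2 : th < pi / 2.
  rewrite /th; rewrite ltr_pM2l ?pi_gt0 //; rewrite ltf_pV2 ?posrE //.
  by rewrite ltr_nat.
have c0 : 0 < cos th by apply: cos_gt0_pihalf; apply/andP; split; lra.
have s0 : 0 < sin th.
  apply: sin_gt0_pi; apply/andP; split => //; have := pi_gt0 R; lra.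
set c := cos th in c0 AB *; set s := sin th in s0.
have cs : c ^+ 2 + s ^+ 2 = 1 by rewrite /c /s cos2Dsin2.
have A0' : 0 < A.
  rewrite lt_neqAle A0 andbT; apply/eqP => E; move: AB; rewrite -E mul0r => E2.
  have : 0 < 4 * c ^+ 2 by apply: mulr_gt0 => //; apply: exprn_gt0.
  by rewrite -E2 ltxx.
have B0' : 0 < B.
  rewrite lt_neqAle B0 andbT; apply/eqP => E; move: AB; rewrite -E mulr0 => E2.
  have : 0 < 4 * c ^+ 2 by apply: mulr_gt0 => //; apply: exprn_gt0.
  by rewrite -E2 ltxx.
set S := fun k : nat => sin (k%:R * th).
have Srec : forall k, S k.+2 = 2 * c * S k.+1 - S k.
  move=> k; rewrite /S.
  have E1 : k.+2%:R * th = k.+1%:R * th + th by rewrite -[k.+2]addn1 natrD mulrDl mul1r.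
  have E2 : k%:R * th = k.+1%:R * th - th by rewrite -[k.+1]addn1 natrD mulrDl mul1r addrK.
  rewrite E1 E2 sinD sinB /c; ring.
have key : forall k, (forall A B : R, A * B = 4 * c ^+ 2 ->
      hh k A B * s = (if odd k then 1 else A / (2 * c)) * S k) /\
    (forall A B : R, A * B = 4 * c ^+ 2 ->
      hh k.+1 A B * s = (if odd k.+1 then 1 else A / (2 * c)) * S k.+1).
  elim => [|k [IH1 IH2]].
    split => A1 B1 _; first by rewrite hh0 mul0r /S (_ : 0%:R * th = 0) ?sin0 ?mulr0 // mul0r.
    by rewrite hh1 /S /= !mul1r.
  split => // A1 B1 E.
  have E' : B1 * A1 = 4 * c ^+ 2 by rewrite mulrC.
  rewrite hhSS mulrBl -mulrA (IH2 _ _ E') (IH1 _ _ E) Srec.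
  move: E; rewrite /=; case: (odd k) => /= E.
    by rewrite !mulrA E; field; rewrite gt_eqF.
  by field; rewrite gt_eqF.
have Sge0 : forall k, (k <= m)%N -> 0 <= S k.
  move=> k km; rewrite /S; apply: sin_ge0_pi; apply/andP; split.
    by apply: mulr_ge0 => //; apply: ltW.
  rewrite -thm; apply: ler_wpM2r; first exact: ltW.
  by rewrite ler_nat.
have coef_ge0 : forall (A1 : R) k, 0 < A1 -> 0 <= (if odd k then 1 else A1 / (2 * c)).
  move=> A1 k A10; case: (odd k) => //; apply: divr_ge0; first exact: ltW.
  by apply: mulr_ge0 => //; apply: ltW.
have AB' : B * A = 4 * c ^+ 2 by rewrite mulrC.
have hkey : forall k (A1 B1 : R), A1 * B1 = 4 * c ^+ 2 ->
   hh k A1 B1 * s = (if odd k then 1 else A1 / (2 * c)) * S k.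
  by move=> k; have [K _] := key k.
split.
  move=> k km; split; rewrite -(pmulr_lge0 _ s0).
    by rewrite (hkey _ _ _ AB); apply: mulr_ge0; [exact: coef_ge0 | exact: Sge0].
  by rewrite (hkey _ _ _ AB'); apply: mulr_ge0; [exact: coef_ge0 | exact: Sge0].
have Sm : S m = 0 by rewrite /S thm sinpi.
have hz : forall (A1 B1 : R), A1 * B1 = 4 * c ^+ 2 -> hh m A1 B1 = 0.
  move=> A1 B1 E; have := hkey m A1 B1 E; rewrite Sm mulr0 => /eqP.
  by rewrite mulf_eq0 (gt_eqF s0) orbF => /eqP.
split; first exact: hz.
split; first exact: hz.
rewrite AB; apply/eqP => E.
have : 0 < s ^+ 2 by apply: exprn_gt0.
lra.
Qed.
End Trig.

Lemma egcm_dih (R : realType) (n : nat) (M : 'M[R]_n) :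
  EGCM M -> forall x y, x != y -> DihP M x y.
Proof.
case=> Md [Hle [Hsym Hcase]] x y xy.
have A0 : 0 <= - M x y by rewrite oppr_ge0; apply: Hle.
have B0 : 0 <= - M y x by rewrite oppr_ge0; apply: Hle; rewrite eq_sym.
have ABe : (- M x y) * (- M y x) = M x y * M y x by rewrite mulrNN.
case: (eqVneq (M x y * M y x) 0) => [P0 | P0].
  have [Exy Eyx] : M x y = 0 /\ M y x = 0.
    move: P0 => /eqP; rewrite mulf_eq0 => /orP [] /eqP E; split => //.
      by apply/eqP; apply/negP => /negP H; move: ((Hsym y x).1 H); rewrite E eqxx.
    by apply/eqP; apply/negP => /negP H; move: ((Hsym x y).1 H); rewrite E eqxx.
  right; exists 1%N; rewrite Exy Eyx oppr0.
  split; first by move=> k k2; split; apply: hh_zero.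
  by rewrite /= mul0r subrr mul0r subr0 pnatr_eq0.
have Mxy : M x y != 0 by apply: contraNneq P0 => ->; rewrite mul0r.
have Myx : M y x != 0 by apply: contraNneq P0 => ->; rewrite mulr0.
case: (Hcase x y xy P0) => [H4 | [m [m3 Em]]].
  left; apply: hh_inf; rewrite ?ABe //.
    by rewrite lt_neqAle A0 andbT eq_sym oppr_eq0.
  by rewrite lt_neqAle B0 andbT eq_sym oppr_eq0.
have := hh_fin m3 A0 B0 (etrans ABe Em).
case: m m3 {Em} => [|m'] // m3 H; right; exists m'; exact: H.
Qed.

Unset Implicit Arguments.
Set Strict Implicit.

Theorem proposition5p4 (R : realType) (n : nat) (M : 'M[R]_n)
    (lam : 'I_n -> R) (len : option nat) (g : nat -> 'I_n) :
  EGCM M -> strongly_dominant lam -> game_sequence M lam len g ->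
  forall j k : nat, (j < k)%N -> in_range len k ->
    root_functional (beta M g k) <> root_functional (beta M g j).
Proof.
move=> Heg _ [Hleg _] j k jk Hk Heq.
have Md : forall i, M i i = 2 by case: Heg.
have Hd := egcm_dih Heg.
have legal : forall u, (u < k)%N -> 0 < play M lam g u (g u).
  move=> u uk; apply: Hleg; move: Hk; case: len => //= N kN; exact: ltn_trans uk kN.
have Eb : beta M g k = beta M g j.
  apply: funext => i; have := congr1 (fun f => f (alpha R i)) Heq.
  by rewrite /root_functional !sum_alpha.
have := claimA Md Hd legal jk (g k).
rewrite /vv -Eb /beta -/(pre g k) wact_revK // /alpha eqxx; lra.
Qed.
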